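(* Let $K>1$ and let $r>0$ satisfy $r=\dfrac{I_1(2Kr)}{I_0(2Kr)}$. Then $$r<\sqrt[4]{1-\frac{1}{K}}.$$
   Context: $I_\nu$ denotes the modified Bessel function of the first kind of order $\nu$. The equation $r=I_1(2Kr)/I_0(2Kr)$ is the self-consistency equation for the asymptotic order parameter $r$ of the stochastic Kuramoto model with coupling $K$. *)

(* Defs.v *)
From Stdlib Require Import Reals Factorial.
From Coquelicot Require Import Coquelicot.
Open Scope R_scope.

(* Modified Bessel function of the first kind of integer order n:
   I_n(x) = sum_{k>=0} (x/2)^(2k+n) / (k! (k+n)!).
   The series converges absolutely for every real x. *)
Definition bessel_I (n : nat) (x : R) : R :=
  Series (fun k : nat => (x / 2) ^ (2 * k + n) / (INR (fact k) * INR (fact (k + n)))).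

Definition bessel_I0 (x : R) : R := bessel_I 0 x.
Definition bessel_I1 (x : R) : R := bessel_I 1 x.

(* Main.v *)
Require Import Defs.
From Stdlib Require Import Reals Factorial Lra Lia Psatz Classical.
From Coquelicot Require Import Coquelicot.
Open Scope R_scope.

Definition c0 (k : nat) : R := / (INR (fact k) * INR (fact k)).
Definition c1 (k : nat) : R := / (INR (fact k) * INR (fact (k + 1))).

Lemma fact_pos k : 0 < INR (fact k).
Proof. apply lt_0_INR, lt_O_fact. Qed.

Lemma inv_lim : is_lim_seq (fun n => / INR (S n)) 0.
Proof.
  apply (is_lim_seq_incr_1 (fun n => / INR n)).
  replace (Finite 0) with (Rbar_inv p_infty) by reflexivity.
  apply is_lim_seq_inv. apply is_lim_seq_INR. discriminate.
Qed.

Lemma rad_inf (a : nat -> R) : (forall n, 0 < a n) ->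
  (forall n, a (S n) / a n <= / INR (S n)) -> CV_radius a = p_infty.
Proof.
  intros Hp Hr. apply CV_radius_infinite_DAlembert.
  - intros n. specialize (Hp n). lra.
  - apply is_lim_seq_le_le with (u := fun _ => 0) (w := fun n => / INR (S n)).
    + intros n. split. apply Rabs_pos.
      rewrite Rabs_pos_eq. apply Hr.
      apply Rlt_le, Rdiv_lt_0_compat; apply Hp.
    + apply is_lim_seq_const.
    + apply inv_lim.
Qed.

Lemma c0_pos n : 0 < c0 n.
Proof. unfold c0. apply Rinv_0_lt_compat, Rmult_lt_0_compat; apply fact_pos. Qed.
Lemma c1_pos n : 0 < c1 n.
Proof. unfold c1. apply Rinv_0_lt_compat, Rmult_lt_0_compat; apply fact_pos. Qed.

Lemma fact_S_R k : INR (fact (S k)) = INR (S k) * INR (fact k).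
Proof. rewrite fact_simpl, mult_INR. reflexivity. Qed.

Lemma rad0 : CV_radius c0 = p_infty.
Proof.
  apply rad_inf. apply c0_pos. intros n. unfold c0. rewrite fact_S_R.
  pose proof (fact_pos n). assert (0 < INR (S n)) by (apply lt_0_INR; lia).
  assert (1 <= INR (S n)) by (apply (le_INR 1); lia).
  unfold Rdiv. rewrite Rinv_inv.
  replace (/ (INR (S n) * INR (fact n) * (INR (S n) * INR (fact n))) *
    (INR (fact n) * INR (fact n))) with (/ INR (S n) * / INR (S n)) by (field; lra).
  rewrite <- (Rmult_1_r (/ INR (S n))) at 3.
  apply Rmult_le_compat_l. left; apply Rinv_0_lt_compat; lra.
  rewrite <- Rinv_1. apply Rinv_le_contravar; lra.
Qed.

Lemma rad1 : CV_radius c1 = p_infty.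
Proof.
  apply rad_inf. apply c1_pos. intros n. unfold c1.
  replace (S n + 1)%nat with (S (S n)) by lia. replace (n+1)%nat with (S n) by lia.
  rewrite (fact_S_R (S n)), (fact_S_R n).
  pose proof (fact_pos n). assert (0 < INR (S n)) by (apply lt_0_INR; lia).
  assert (1 <= INR (S (S n))) by (apply (le_INR 1); lia).
  unfold Rdiv. rewrite Rinv_inv.
  replace (/ (INR (S n) * INR (fact n) * (INR (S (S n)) * (INR (S n) * INR (fact n)))) *
    (INR (fact n) * (INR (S n) * INR (fact n)))) with (/ INR (S n) * / INR (S (S n))) by (field; lra).
  rewrite <- (Rmult_1_r (/ INR (S n))) at 2.
  apply Rmult_le_compat_l. left; apply Rinv_0_lt_compat; lra.
  rewrite <- Rinv_1. apply Rinv_le_contravar; lra.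
Qed.

Lemma rad2 : CV_radius (PS_derive c1) = p_infty.
Proof. rewrite CV_radius_derive. apply rad1. Qed.
Definition F0 := PSeries c0.
Definition F1 := PSeries c1.
Definition F2 := PSeries (PS_derive c1).

Lemma exps (a : nat -> R) y : CV_radius a = p_infty -> ex_pseries a y.
Proof. intros H. apply CV_radius_inside. rewrite H. exact I. Qed.

Lemma dF0 y : is_derive F0 y (F1 y).
Proof.
  unfold F0, F1. replace (PSeries c1 y) with (PSeries (PS_derive c0) y).
  apply is_derive_PSeries. rewrite rad0. exact I.
  apply PSeries_ext. intros n. unfold PS_derive, c0, c1.
  replace (n+1)%nat with (S n) by lia. rewrite fact_S_R.
  pose proof (fact_pos n). assert (0 < INR (S n)) by (apply lt_0_INR; lia).
  field. lra.
Qed.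

Lemma dF1 y : is_derive F1 y (F2 y).
Proof. unfold F1, F2. apply is_derive_PSeries. rewrite rad1. exact I. Qed.

Lemma relF y : F0 y = F1 y + y * F2 y.
Proof.
  unfold F0, F1, F2. rewrite <- PSeries_incr_1.
  rewrite <- PSeries_plus.
  2: apply exps, rad1.
  2: apply ex_pseries_incr_1, exps, rad2.
  apply PSeries_ext. intros [|n].
  - unfold PS_plus, PS_incr_1, c0, c1. simpl. unfold plus, zero; simpl. field.
  - unfold PS_plus, PS_incr_1, PS_derive, c0, c1. change (plus ?a ?b) with (a + b).
    replace (S n + 1)%nat with (S (S n)) by lia.
    rewrite (fact_S_R (S n)), (fact_S_R n).
    pose proof (fact_pos n). assert (0 < INR (S n)) by (apply lt_0_INR; lia).
    assert (0 < INR (S (S n))) by (apply lt_0_INR; lia).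
    rewrite (S_INR (S n)). field. lra.
Qed.

Lemma ps_ge (a : nat -> R) y : CV_radius a = p_infty -> (forall n, 0 <= a n) -> 0 <= y ->
  a 0%nat <= PSeries a y.
Proof.
  intros Hr Hp Hy. unfold PSeries.
  assert (He : ex_series (fun k => a k * y ^ k)) by (apply ex_pseries_R, exps, Hr).
  rewrite Series_incr_1 by exact He. simpl. rewrite Rmult_1_r.
  cut (0 <= Series (fun k => a (S k) * (y * y ^ k))). lra.
  apply Rle_trans with (Series (fun _ => 0)).
  - right. rewrite (Series_ext _ (fun n:nat => 0 * 0)) by (intros; ring).
    rewrite (Series_scal_l 0 (fun _ => 0)). ring.
  - apply Series_le.
    + intros n. split. lra. apply Rmult_le_pos. apply Hp. apply Rmult_le_pos. lra. apply pow_le; lra.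
    + apply (ex_series_incr_1 (fun k => a k * y ^ k)). exact He.
Qed.

Lemma F0_ge y : 0 <= y -> 1 <= F0 y.
Proof.
  intros. replace 1 with (c0 0) by (unfold c0; simpl; field).
  apply ps_ge; auto. apply rad0. intros; left; apply c0_pos.
Qed.
Lemma F1_ge y : 0 <= y -> 1 <= F1 y.
Proof.
  intros. replace 1 with (c1 0) by (unfold c1; simpl; field).
  apply ps_ge; auto. apply rad1. intros; left; apply c1_pos.
Qed.
Lemma F2_ge y : 0 <= y -> / 2 <= F2 y.
Proof.
  intros. replace (/2) with (PS_derive c1 0) by (unfold PS_derive, c1; simpl; field).
  apply ps_ge; auto. apply rad2. intros; unfold PS_derive.
  apply Rmult_le_pos. apply pos_INR. left; apply c1_pos.
Qed.

Lemma cont_eps f x l : derivable_pt_lim f x l ->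
  forall eps, 0 < eps -> exists del, 0 < del /\ forall z, Rabs (z - x) < del -> Rabs (f z - f x) < eps.
Proof.
  intros Hd eps He.
  assert (Hc : continuity_pt f x) by (apply derivable_continuous_pt; exists l; exact Hd).
  unfold continuity_pt, continue_in, limit1_in, limit_in in Hc.
  destruct (Hc eps He) as [del [Hdel H]]. exists del. split; auto.
  intros z Hz. destruct (Req_dec z x) as [->|Hne].
  - rewrite Rminus_diag, Rabs_R0. exact He.
  - apply (H z). split. split. exact I. auto. exact Hz.
Qed.

Lemma crossing (G dG : R -> R) (d0 : R) : 0 < d0 ->
  (forall y, 0 < y <= d0 -> 0 < G y) ->
  (forall y, 0 < y -> derivable_pt_lim G y (dG y)) ->
  (forall y, 0 < y -> G y = 0 -> 0 < dG y) ->
  forall y, 0 < y -> 0 < G y.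
Proof.
  intros Hd0 Hsmall Hder Hcross y1 Hy1.
  destruct (Rle_dec y1 d0) as [Hle|Hgt]. { apply Hsmall; lra. }
  destruct (Rlt_le_dec 0 (G y1)) as [Hok|Hbad]; [exact Hok|exfalso].
  set (T := fun z => d0 <= z /\ forall w, d0 <= w <= z -> 0 < G w).
  assert (HTb : forall z, T z -> z < y1).
  { intros z [Hz1 Hz2]. destruct (Rlt_le_dec z y1); auto.
    specialize (Hz2 y1 ltac:(lra)). lra. }
  assert (HTd : T d0).
  { split. lra. intros w Hw. apply Hsmall; lra. }
  destruct (completeness T) as [m [Hub Hlub]].
  { exists y1. intros z Hz. left. apply HTb; auto. }
  { exists d0. exact HTd. }
  assert (Hm1 : d0 <= m) by (apply Hub; exact HTd).
  assert (Hm2 : m <= y1).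
  { apply Hlub. intros z Hz. left; apply HTb; auto. }
  assert (Hm0 : 0 < m) by lra.
  assert (C1 : forall w, d0 <= w < m -> 0 < G w).
  { intros w Hw. destruct (classic (exists z, T z /\ w < z)) as [[z [[Hz1 Hz2] Hwz]]|Hn].
    - apply Hz2. lra.
    - exfalso. assert (m <= w).
      { apply Hlub. intros z Hz. destruct (Rle_dec z w) as [|Hnz]; auto.
        exfalso. apply Hn. exists z. split; auto. lra. }
      lra. }
  pose proof (cont_eps _ _ _ (Hder m Hm0)) as Hc.
  assert (C2 : G m <= 0).
  { destruct (Rle_dec (G m) 0) as [|Hpos]; auto. exfalso.
    destruct (Hc (G m) ltac:(lra)) as [del [Hdel Hz]].
    assert (T (m + del / 2)).
    { split. lra. intros w Hw. destruct (Rlt_le_dec w m). apply C1; lra.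
      assert (Rabs (w - m) < del) by (rewrite Rabs_pos_eq; lra).
      specialize (Hz w H). apply Rabs_lt_between in Hz. lra. }
    assert (m + del/2 <= m) by (apply Hub; auto). lra. }
  assert (Hmd : d0 < m).
  { destruct (Req_dec m d0) as [E|]. 2: lra. exfalso.
    assert (0 < G d0) by (apply Hsmall; lra). rewrite E in C2. lra. }
  assert (C3 : G m = 0).
  { destruct (Rle_lt_or_eq_dec _ _ C2) as [Hneg|]; auto. exfalso.
    destruct (Hc (- G m) ltac:(lra)) as [del [Hdel Hz]].
    set (w := Rmax d0 (m - del/2)).
    assert (d0 <= w) by apply Rmax_l.
    assert (m - del/2 <= w) by apply Rmax_r.
    assert (w < m) by (unfold w; apply Rmax_lub_lt; lra).
    assert (Rabs (w - m) < del) by (rewrite Rabs_left; lra).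
    specialize (Hz w H2). apply Rabs_lt_between in Hz.
    assert (0 < G w) by (apply C1; lra). lra. }
  assert (Hdpos := Hcross m Hm0 C3).
  destruct (Hder m Hm0 (dG m / 2) ltac:(lra)) as [[del Hdel] Hq].
  set (h := - Rmin (del/2) ((m - d0)/2)).
  assert (Hh1 : h < 0) by (unfold h; apply Ropp_lt_gt_0_contravar, Rmin_pos; lra).
  assert (Hh2 : - h <= del/2) by (unfold h; rewrite Ropp_involutive; apply Rmin_l).
  assert (Hh3 : - h <= (m - d0)/2) by (unfold h; rewrite Ropp_involutive; apply Rmin_r).
  specialize (Hq h ltac:(lra) ltac:(rewrite Rabs_left; simpl; lra)).
  rewrite C3 in Hq. apply Rabs_lt_between in Hq.
  assert (Hq2 : 0 < (G (m + h) - 0) / h) by lra.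
  assert (Hneg : G (m + h) < 0).
  { replace (G (m+h)) with (((G (m + h) - 0) / h) * h) by (field; lra).
    apply Rmult_pos_neg; lra. }
  assert (0 < G (m + h)) by (apply C1; lra). lra.
Qed.

Lemma d_mul f g x a b : is_derive f x a -> is_derive g x b ->
  is_derive (fun t => f t * g t) x (a * g x + f x * b).
Proof. intros. apply (is_derive_mult f g x a b); auto. intros; apply Rmult_comm. Qed.
Lemma d_sub f g x a b : is_derive f x a -> is_derive g x b ->
  is_derive (fun t => f t - g t) x (a - b).
Proof. intros. apply (is_derive_minus f g x a b); auto. Qed.
Lemma d_eq (f : R -> R) (x a b : R) : is_derive f x a -> a = b -> is_derive f x b.
Proof. intros H ->; auto. Qed.

Definition G y := F0 y ^ 3 * (F0 y - F1 y) - y ^ 2 * F1 y ^ 4.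
Definition dG y := 3 * F0 y ^ 2 * F1 y * (F0 y - F1 y) + F0 y ^ 3 * (F1 y - F2 y)
  - (2 * y * F1 y ^ 4 + y ^ 2 * (4 * F1 y ^ 3 * F2 y)).

Lemma derG y : derivable_pt_lim G y (dG y).
Proof.
  apply is_derive_Reals. unfold G.
  eapply d_eq.
  - apply d_sub. apply d_mul. apply is_derive_pow, dF0. apply d_sub; [apply dF0|apply dF1].
    apply d_mul. apply is_derive_pow. apply (is_derive_id y). apply is_derive_pow, dF1.
  - unfold dG. simpl. unfold one; simpl. ring.
Qed.

Lemma algebra p q s y : 0 < p -> 0 < q -> 0 < s -> 0 < y -> q = p + y * s ->
  q ^ 3 * (q - p) - y ^ 2 * p ^ 4 = 0 ->
  0 < 3 * q ^ 2 * p * (q - p) + q ^ 3 * (p - s) - (2 * y * p ^ 4 + y ^ 2 * (4 * p ^ 3 * s)).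
Proof.
  intros Hp Hq Hs Hy Hrel H0.
  set (u := p / q). set (z := y * u ^ 2).
  assert (Hs' : s = (q - p) / y) by (rewrite Hrel; field; lra).
  assert (Hu : 0 < u) by (unfold u; apply Rdiv_lt_0_compat; lra).
  assert (Hz : 0 < z) by (unfold z; apply Rmult_lt_0_compat; [lra| apply pow_lt; lra]).
  assert (Hz2 : z ^ 2 = 1 - u).
  { unfold z, u. replace ((y * (p/q)^2)^2) with ((y^2 * p^4) / q^4) by (field; lra).
    replace (y^2 * p^4) with (q^3 * (q-p)) by lra. field. lra. }
  assert (Hz1 : z < 1) by nra.
  assert (HE : y * (3 * q ^ 2 * p * (q - p) + q ^ 3 * (p - s) - (2 * y * p ^ 4 + y ^ 2 * (4 * p ^ 3 * s))) * p
     = q ^ 5 * (3 * z * (1 - u) + z - u * (1 - u) - 2 * z ^ 2 * u - 4 * z ^ 2 * (1 - u))).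
  { rewrite Hs'. unfold z, u. field. lra. }
  assert (Hu' : u = 1 - z ^ 2) by lra.
  assert (HE2 : 3 * z * (1 - u) + z - u * (1 - u) - 2 * z ^ 2 * u - 4 * z ^ 2 * (1 - u) = z * (1 - z) ^ 3).
  { rewrite Hu'. ring. }
  rewrite HE2 in HE.
  assert (0 < q ^ 5 * (z * (1 - z) ^ 3)).
  { apply Rmult_lt_0_compat. apply pow_lt; lra. apply Rmult_lt_0_compat. lra. apply pow_lt; lra. }
  set (D := 3 * q ^ 2 * p * (q - p) + q ^ 3 * (p - s) - (2 * y * p ^ 4 + y ^ 2 * (4 * p ^ 3 * s))) in *.
  clearbody D. destruct (Rlt_le_dec 0 D) as [|HD]; auto.
  assert (y * D <= 0) by nra. assert (y * D * p <= 0) by nra. lra.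
Qed.

Lemma G_cross y : 0 < y -> G y = 0 -> 0 < dG y.
Proof.
  intros Hy H0. unfold G, dG in *.
  pose proof (F0_ge y ltac:(lra)). pose proof (F1_ge y ltac:(lra)). pose proof (F2_ge y ltac:(lra)).
  apply algebra; try lra. apply relF.
Qed.

Lemma G_small : exists d0, 0 < d0 /\ forall y, 0 < y <= d0 -> 0 < G y.
Proof.
  assert (Hd : derivable_pt_lim F1 0 (F2 0)) by (apply is_derive_Reals, dF1).
  destruct (cont_eps _ _ _ Hd 1 ltac:(lra)) as [del [Hdel Hc]].
  assert (HF10 : F1 0 = 1) by (unfold F1; rewrite PSeries_0; unfold c1; simpl; field).
  exists (Rmin (del/2) (1/64)). split. apply Rmin_pos; lra.
  intros y [Hy1 Hy2].
  assert (y <= del/2) by (eapply Rle_trans; [exact Hy2| apply Rmin_l]).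
  assert (y <= 1/64) by (eapply Rle_trans; [exact Hy2| apply Rmin_r]).
  specialize (Hc y ltac:(rewrite Rminus_0_r, Rabs_pos_eq; lra)).
  rewrite HF10 in Hc. apply Rabs_lt_between in Hc.
  pose proof (F0_ge y ltac:(lra)). pose proof (F1_ge y ltac:(lra)). pose proof (F2_ge y ltac:(lra)).
  unfold G. replace (F0 y - F1 y) with (y * F2 y) by (rewrite (relF y); ring).
  set (a := F0 y) in *. set (b := F1 y) in *. set (c := F2 y) in *.
  assert (1 <= a ^ 3) by (rewrite <- (pow1 3); apply pow_incr; lra).
  assert (b ^ 4 <= 16) by (replace 16 with (2^4) by ring; apply pow_incr; lra).
  assert (a ^ 3 * c >= /2) by nra.
  assert (y * b ^ 4 <= 1/4) by nra.
  replace (a ^ 3 * (y * c) - y ^ 2 * b ^ 4) with (y * (a ^ 3 * c - y * b ^ 4)) by ring.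
  apply Rmult_lt_0_compat; lra.
Qed.

Lemma G_pos y : 0 < y -> 0 < G y.
Proof.
  destruct G_small as [d0 [Hd0 Hs]].
  apply (crossing G dG d0 Hd0 Hs). intros; apply derG. apply G_cross.
Qed.

Lemma I0_eq x : bessel_I0 x = F0 ((x/2)^2).
Proof.
  unfold bessel_I0, bessel_I, F0, PSeries. apply Series_ext. intros k.
  rewrite !Nat.add_0_r, <- pow_mult. unfold c0, Rdiv. ring.
Qed.

Lemma I1_eq x : bessel_I1 x = (x/2) * F1 ((x/2)^2).
Proof.
  unfold bessel_I1, bessel_I, F1, PSeries. rewrite <- Series_scal_l. apply Series_ext. intros k.
  rewrite pow_add, <- pow_mult. unfold c1, Rdiv. ring.
Qed.

Theorem mainTheorem1 (K r : R) (hK : 1 < K) (hr : 0 < r)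
  (hfix : r = bessel_I1 (2 * K * r) / bessel_I0 (2 * K * r)) :
  r < Rpower (1 - 1 / K) (1 / 4).
Proof.
  rewrite I0_eq, I1_eq in hfix.
  set (t := K * r). replace (2 * K * r / 2) with t in hfix by (unfold t; field).
  assert (Ht : 0 < t) by (unfold t; nra).
  pose proof (G_pos (t^2) ltac:(apply pow_lt; lra)) as HG. unfold G in HG.
  pose proof (F0_ge (t^2) ltac:(apply pow_le; lra)).
  pose proof (F1_ge (t^2) ltac:(apply pow_le; lra)).
  set (a := F0 (t^2)) in *. set (b := F1 (t^2)) in *.
  assert (H1K : 1 / K = b / a).
  { replace K with (t / r) by (unfold t; field; lra). rewrite hfix. field. repeat split; lra. }
  assert (Hr4 : r ^ 4 < 1 - 1 / K).
  { rewrite H1K, hfix.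
    assert (E : 1 - b / a - (t * b / a) ^ 4 = (a ^ 3 * (a - b) - (t ^ 2) ^ 2 * b ^ 4) / a ^ 4)
      by (field; lra).
    assert (0 < (a ^ 3 * (a - b) - (t ^ 2) ^ 2 * b ^ 4) / a ^ 4)
      by (apply Rdiv_lt_0_compat; [lra| apply pow_lt; lra]).
    lra. }
  assert (Hr : r = Rpower (r ^ 4) (1 / 4)).
  { rewrite <- (Rpower_pow 4 r hr), Rpower_mult.
    replace (INR 4 * (1 / 4)) with 1 by (simpl; field). rewrite Rpower_1; auto. }
  rewrite Hr at 1. apply Rlt_Rpower_l. lra. split. apply pow_lt; lra. exact Hr4.
Qed.
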